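(* Let $I=(G,T,k)$, $G=(V,E)$, be a Node Multiway Cut instance satisfying: (R1) no two terminals are adjacent and $p(I)\ge 0$; (R2) no vertex of $V\setminus T$ is adjacent to two distinct terminals; (R3) for every terminal $t$ and every neighbour $w\in V\setminus T$ of $t$, the optimum of the LP-relaxation of $I$ with the additional constraint $d_w=0$ is strictly larger than $LP(I)$; (R5) every connected component of $G$ contains at least two terminals. Then $|T|\le 2k$.
   Context: A Node Multiway Cut instance $I=(G,T,k)$ consists of a simple undirected graph $G=(V,E)$, a set $T\subseteq V$ of terminals and an integer $k$; it is a YES-instance iff there is a set $X\subseteq V\setminus T$ with $|X|\le k$ such that every path in $G$ between two distinct terminals contains a vertex of $X$. Let $\mathcal P(I)$ be the set of all simple paths in $G$ connecting two distinct terminals. The LP-relaxation of $I$ is: minimize $\sum_{v\in V\setminus T} d_v$ subject to $\sum_{v\in V(P)\setminus T} d_v\ge 1$ for every $P\in\mathcal P(I)$ and $d_v\ge 0$ for all $v\in V\setminus T$. $LP(I)$ denotes its optimum value and $p(I)=k-LP(I)$. *)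

(* Defs.v *)
From HB Require Import structures.
From mathcomp Require Import all_boot all_order all_algebra.
Set Implicit Arguments. Unset Strict Implicit. Unset Printing Implicit Defensive.
Import Order.TTheory GRing.Theory Num.Theory.
Local Open Scope ring_scope.

Definition simple_graph (V : finType) (e : rel V) : Prop :=
  symmetric e /\ irreflexive e.

Definition term_path (V : finType) (e : rel V) (T : {set V}) (x : V) (s : seq V) : bool :=
  [&& path e x s, uniq (x :: s), x \in T, last x s \in T & x != last x s].

Definition lp_obj (V : finType) (T : {set V}) (d : V -> rat) : rat :=
  \sum_(v in ~: T) d v.

(* Feasibility for the LP relaxation, with the additional constraints
   d_v = 0 for v in Z (Z = set0 gives the plain relaxation). Values of d on
   terminals are irrelevant (not variables of the LP). *)
Definition lp_feasible (V : finType) (e : rel V) (T Z : {set V}) (d : V -> rat) : Prop :=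
  (forall v, v \notin T -> 0 <= d v) /\
  (forall v, v \notin T -> v \in Z -> d v = 0) /\
  (forall x s, term_path e T x s -> 1 <= \sum_(v <- x :: s | v \notin T) d v).

Definition lp_optimum (V : finType) (e : rel V) (T Z : {set V}) (x : rat) : Prop :=
  (exists d, lp_feasible e T Z d /\ lp_obj T d = x) /\
  (forall d, lp_feasible e T Z d -> x <= lp_obj T d).

(* Main.v *)
Require Import Defs.
From HB Require Import structures.
From mathcomp Require Import all_boot all_order all_algebra.
From mathcomp Require Import ring lra.
Import Order.TTheory GRing.Theory Num.Theory.
Local Open Scope ring_scope.

Lemma sub_sum (V : finType) (T : {set V}) (d : V -> rat) (q p : seq V) :
  (forall v, v \notin T -> 0 <= d v) -> uniq q -> uniq p ->
  (forall v, v \in q -> v \notin T -> v \in p) ->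
  \sum_(v <- q | v \notin T) d v <= \sum_(v <- p | v \notin T) d v.
Proof.
move=> Hnn; elim: q p => [|y q IH] p /= Uq Up Hsub.
  by rewrite big_nil; apply: sumr_ge0 => v /Hnn.
case/andP: Uq => yq Uq.
rewrite big_cons; case: ifP => yT.
  have yp : y \in p by apply: Hsub => //; rewrite inE eqxx.
  rewrite (perm_big _ (perm_to_rem yp)) big_cons yT lerD2l.
  apply: IH => //; first by rewrite rem_uniq.
  move=> v vq vT; rewrite (mem_rem_uniq _ Up) inE; apply/andP; split.
    by apply: contraNneq yq => <-.
  by apply: Hsub => //; rewrite inE vq orbT.
apply: IH => // v vq vT; apply: Hsub => //; by rewrite inE vq orbT.
Qed.

Lemma count2 (V : eqType) (P : pred V) s : (2 <= count P s)%N ->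
  exists s1 w s2, [/\ s = s1 ++ w :: s2, P w & has P s2].
Proof.
elim: s => [|y s IH] //=.
case Py: (P y) => /= H.
  exists [::], y, s; split => //; rewrite has_count.
  by move: H; rewrite add1n ltnS.
have [s1 [w [s2 [-> Pw Hs2]]]] := IH H.
by exists (y :: s1), w, s2.
Qed.

Lemma count3 (V : eqType) (P : pred V) s : (3 <= count P s)%N ->
  exists s1 w s2, [/\ s = s1 ++ w :: s2, has P s1, P w & has P s2].
Proof.
elim: s => [|y s IH] //=.
case Py: (P y) => /= H.
  have H2 : (2 <= count P s)%N by move: H; rewrite add1n ltnS.
  have [s1 [w [s2 [-> Pw Hs2]]]] := @count2 _ P s H2.
  by exists (y :: s1), w, s2; split => //=; rewrite Py.
have [s1 [w [s2 [-> H1 Pw Hs2]]]] := IH H.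
by exists (y :: s1), w, s2; split => //=; rewrite H1 orbT.
Qed.

Lemma exists_min (V : eqType) (d : V -> rat) (s : seq V) :
  (forall v, v \in s -> 0 < d v) ->
  exists m, [/\ 0 < m, m <= 1 & forall v, v \in s -> m <= d v].
Proof.
elim: s => [|y s IH] H.
  by exists 1; split => // v; rewrite in_nil.
have [m [m0 m1 hm]] : exists m, [/\ 0 < m, m <= 1 & forall v, v \in s -> m <= d v].
  by apply: IH => v vs; apply: H; rewrite inE vs orbT.
have dy : 0 < d y by apply: H; rewrite inE eqxx.
case: (leP m (d y)) => h.
  by exists m; split => // v; rewrite inE => /orP [/eqP -> | /hm].
exists (d y); split => //; first by apply: ltW; apply: lt_le_trans m1.
move=> v; rewrite inE => /orP [/eqP -> // | /hm hv].
by apply: le_trans hv; apply: ltW.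
Qed.

Lemma sumN (V : finType) (T N : {set V}) (p : seq V) :
  (forall v, v \in N -> v \notin T) ->
  \sum_(v <- p | v \notin T) ((v \in N)%:R : rat) = (count (mem N) p)%:R.
Proof.
move=> NT; elim: p => [|y p IH]; first by rewrite big_nil.
rewrite big_cons /= IH natrD.
case: ifP => yT; case: (boolP (y \in N)) => yN /=; rewrite ?add0r //.
by move: (NT y yN); rewrite yT.
Qed.

Lemma three (V : finType) (e : rel V) (T : {set V}) (d : V -> rat) (x : V)
  (s1 s2 : seq V) (w a b u : V) (m : rat) :
  symmetric e ->
  (forall v, v \notin T -> 0 <= d v) ->
  (forall x s, term_path e T x s -> 1 <= \sum_(v <- x :: s | v \notin T) d v) ->
  term_path e T x (s1 ++ w :: s2) ->
  a \in s1 -> b \in s2 -> a \notin T -> b \notin T -> w \notin T ->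
  u \in T -> e w u -> m <= d a -> m <= d b ->
  1 + m <= \sum_(v <- x :: s1 ++ w :: s2 | v \notin T) d v.
Proof.
move=> Hsym Hnn Hp /and5P [Hpath Hu Hx Hl Hxl] aS bS aT bT wT uT ewu ma mb.
have Hu' : uniq ((x :: s1) ++ (w :: s2)) by [].
move: (Hu'); rewrite cat_uniq => /and3P [U1 Hdis U2].
have disj : forall v, v \in x :: s1 -> v \in w :: s2 -> False.
  by move=> v h1 h2; move/hasPn: Hdis => /(_ v h2); rewrite h1.
move: Hpath; rewrite cat_path /= => /and3P [P1 ew P2].
have lastE : last x (s1 ++ w :: s2) = last w s2 by rewrite last_cat.
have memp : forall v, v \in x :: s1 ++ w :: s2 = (v \in x :: s1) || (v \in w :: s2).
  by move=> v; rewrite -cat_cons mem_cat.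
have neqT : forall y z, y \in T -> z \notin T -> y != z.
  by move=> y z yT zT; apply: contraNneq zT => <-.
case: (boolP (u \in x :: s1)) => Hux.
  have HQ : term_path e T u (w :: s2).
    apply/and5P; split => //.
    - by rewrite /= (Hsym u w) ewu P2.
    - by rewrite cons_uniq U2 andbT; apply/negP => h; apply: (disj u Hux).
    - by rewrite /= -lastE.
    - apply/negP => /eqP E; apply: (disj u Hux); rewrite E /=; exact: mem_last.
  have := Hp _ _ HQ.
  have Hsub : \sum_(v <- a :: u :: w :: s2 | v \notin T) d v <=
              \sum_(v <- x :: s1 ++ w :: s2 | v \notin T) d v.
    apply: sub_sum => //.
      have ax : a \in x :: s1 by rewrite inE aS orbT.
      rewrite cons_uniq (cons_uniq u) U2 andbT inE negb_or eq_sym (neqT u a uT aT) /=.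
      apply/andP; split; apply/negP => h.
        by apply: (disj a ax).
      by apply: (disj u Hux).
    move=> v; rewrite in_cons in_cons => /or3P [/eqP -> _| /eqP -> | h] ; rewrite ?uT //.
      by rewrite memp inE aS orbT.
    by rewrite memp h orbT.
  rewrite big_cons aT in Hsub => h1.
  apply: le_trans Hsub; rewrite addrC; exact: lerD ma h1.
have HQ : term_path e T x (s1 ++ [:: w; u]).
  apply/and5P; split => //.
  - by rewrite cat_path P1 /= ew ewu.
  - have wx : w \notin x :: s1 by apply/negP => h; apply: (disj w h); rewrite inE eqxx.
    by rewrite -cat_cons cat_uniq U1 /= orbF mem_seq1 negb_or wx Hux (eq_sym w) (neqT u w uT wT).
  - by rewrite last_cat.
  - by rewrite last_cat /=; apply: contraNneq Hux => ->; rewrite inE eqxx.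
have := Hp _ _ HQ.
have bw : b \in w :: s2 by rewrite inE bS orbT.
have Hsub : \sum_(v <- b :: x :: s1 ++ [:: w; u] | v \notin T) d v <=
            \sum_(v <- x :: s1 ++ w :: s2 | v \notin T) d v.
  apply: sub_sum => //.
    rewrite cons_uniq (_ : uniq (x :: s1 ++ [:: w; u]) = true) ?andbT;
      last by case/and5P: HQ.
    rewrite -cat_cons mem_cat negb_or; apply/andP; split.
      by apply/negP => h; apply: (disj b h).
    rewrite !inE negb_or; apply/andP; split.
      by apply/negP => /eqP E; move: U2; rewrite /= -E bS.
    by rewrite eq_sym neqT.
  move=> v; rewrite in_cons => /orP [/eqP -> _| ]; first by rewrite memp bw orbT.
  rewrite -cat_cons mem_cat => /orP [h _|]; first by rewrite memp h.
  rewrite in_cons mem_seq1 => /orP [/eqP -> _| /eqP -> ]; by rewrite ?uT // memp mem_head orbT.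
rewrite big_cons bT in Hsub => h1.
apply: le_trans Hsub; rewrite addrC; exact: lerD mb h1.
Qed.

Theorem mainTheorem7 (V : finType) (e : rel V) (T : {set V}) (k : int) (LP : rat)
  (Hg : simple_graph e)
  (HLP : lp_optimum e T set0 LP)
  (* (R1) *)
  (HR1a : forall t1 t2, t1 \in T -> t2 \in T -> ~~ e t1 t2)
  (HR1b : 0 <= k%:~R - LP)
  (* (R2) *)
  (HR2 : forall v t1 t2, v \notin T -> t1 \in T -> t2 \in T -> t1 != t2 ->
           e v t1 -> e v t2 -> False)
  (* (R3) *)
  (HR3 : forall t w, t \in T -> w \notin T -> e t w ->
           forall x, lp_optimum e T [set w] x -> LP < x)
  (* (R5) *)
  (HR5 : forall v, exists t1 t2, [/\ t1 \in T, t2 \in T, t1 != t2,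
           connect e v t1 & connect e v t2]) :
  (#|T|%:Z <= 2 * k)%R.
Proof.
have [Hsym Hirr] := Hg.
case: HLP => [[d [Hfeas Hobj]] Hopt].
have [Hnn [_ Hpath]] := Hfeas.
pose N : {set V} := [set v | (v \notin T) && [exists t, (t \in T) && e v t]].
have NT : forall v, v \in N -> v \notin T by move=> v; rewrite inE => /andP[].
have Nnb : forall v, v \in N -> exists2 t, t \in T & e v t.
  by move=> v; rewrite inE => /andP[_ /existsP[t /andP[tT evt]]]; exists t.
have Npos : forall v, v \in N -> 0 < d v.
  move=> v vN; rewrite lt_def Hnn ?NT // andbT.
  apply/negP => /eqP dv0.
  have [t tT evt] := Nnb v vN.
  have : lp_optimum e T [set v] LP.
    split.
      exists d; split => //; split => //; split => // w _.
      by rewrite inE => /eqP ->.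
    move=> d' [h1 [_ h3]]; apply: Hopt; split => //; split => // w _.
    by rewrite inE.
  have etv : e t v by rewrite Hsym.
  by move/(HR3 t v tT (NT v vN) etv); rewrite ltxx.
have Npos' : forall v, v \in enum N -> 0 < d v.
  by move=> v; rewrite mem_enum; apply: Npos.
have [m [m0 m1 mN']] := @exists_min _ d (enum N) Npos'.
have mN : forall v, v \in N -> m <= d v by move=> v h; apply: mN'; rewrite mem_enum.
pose n : rat := #|V|%:R.
have n0 : 0 <= n by rewrite /n ler0n.
pose eps := m / (n + 3).
have n3 : 0 < n + 3 by apply: ltr_wpDl.
have eps0 : 0 < eps by rewrite /eps divr_gt0.
have epsE : eps * (n + 3) = m by rewrite /eps divfK // gt_eqF.
have epsn : eps * n <= m.
  by rewrite -epsE ler_pM2l // lerDl.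
have eps3 : eps * 3 <= m.
  by rewrite -epsE ler_pM2l // lerDr ler0n.
have epsm : eps <= m.
  apply: le_trans eps3; rewrite ler_peMr ?ltW //.
have c0 : 0 < 1 - 2 * eps.
  rewrite subr_gt0; apply: (lt_le_trans _ m1); apply: (lt_le_trans _ eps3).
  by rewrite mulrC ltr_pM2l // ltr_nat.
pose c := 1 - 2 * eps.
pose d2 := fun v => (d v - (v \in N)%:R * eps) / c.
have Hfeas2 : lp_feasible e T set0 d2.
  split; [|split].
  - move=> v vT; rewrite /d2; apply: divr_ge0; last exact: ltW c0.
    rewrite subr_ge0.
    case: (boolP (v \in N)) => h; rewrite ?mul1r ?mul0r ?Hnn //.
    by apply: le_trans epsm (mN v h).
  - by move=> v _; rewrite inE.
  - move=> x s Hts.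
    rewrite /d2 -mulr_suml sumrB -mulr_suml (@sumN _ T N _ NT) ler_pdivlMr // mul1r.
    have S1 := Hpath x s Hts.
    have Un : uniq (x :: s) by case/and5P: Hts.
    have Kn : (count (mem N) (x :: s) <= #|V|)%N.
      apply: leq_trans (count_size _ _) _.
      by rewrite -(card_uniqP Un); apply: max_card.
    case: (leqP (count (mem N) (x :: s)) 2) => HK.
      have HK' : (count (mem N) (x :: s))%:R * eps <= 2 * eps.
        by apply: ler_wpM2r; [exact: ltW | rewrite ler_nat].
      rewrite /c; apply: le_trans (lerB S1 HK').
      by rewrite lerD2r.
    have xT : x \in T by case/and5P: Hts.
    have xN : x \notin N by apply: contraL xT; apply: NT.
    have HK3 : (3 <= count (mem N) s)%N by move: HK; rewrite /= (negbTE xN).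
    have [s1 [w [s2 [Es H1 Pw H2]]]] := @count3 _ _ s HK3.
    move: H1 H2 => /hasP [a aS aN] /hasP [b bS bN].
    have [u uT ewu] := Nnb w Pw.
    rewrite Es in Hts *.
    have := @three V e T d x s1 s2 w a b u m Hsym Hnn Hpath Hts aS bS (NT a aN) (NT b bN) (NT w Pw) uT ewu
      (mN a aN) (mN b bN).
    rewrite -Es => Hm.
    have Kle : (count (mem N) (x :: s))%:R * eps <= m.
      apply: le_trans epsn; rewrite mulrC; apply: ler_wpM2l; first exact: ltW.
      by rewrite /n ler_nat.
    rewrite /c; apply: le_trans (lerB Hm Kle).
    by rewrite addrK lerBlDr lerDl mulr_ge0 // ltW.
have Hle := Hopt d2 Hfeas2.
have objE : lp_obj T d2 = (LP - #|N|%:R * eps) / c.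
  rewrite -Hobj /lp_obj /d2 -mulr_suml sumrB -mulr_suml; congr ((_ - _ * _) / _).
  rewrite -sumr_const big_mkcond [RHS]big_mkcond /=; apply: eq_bigr => v _.
  rewrite in_setC; case vN: (v \in N); last by case: (v \in T).
  by rewrite (negbTE (NT v vN)).
rewrite objE ler_pdivlMr // mulrBr mulr1 lerBlDr in Hle.
have HN : #|N|%:R <= 2 * LP.
  rewrite -(ler_pM2r eps0) -mulrA.
  move: Hle; rewrite mulrCA => h; lra.
have nb : forall t, t \in T -> exists w, e t w.
  move=> t tT; have [t1 [t2 [t1T t2T ne c1 c2]]] := HR5 t.
  have [t' [t'T tt' ct']] : exists t', [/\ t' \in T, t != t' & connect e t t'].
    case: (eqVneq t t1) => [Et1|ne1]; last by exists t1.
    by exists t2; split => //; rewrite Et1.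
  case/connectP: ct' => [[|y p] /= Hp Hl]; first by rewrite Hl eqxx in tt'.
  by exists y; case/andP: Hp.
pose f t := odflt t [pick w | e t w].
have fN : forall t, t \in T -> (f t \in N) && e t (f t).
  move=> t tT; rewrite /f; case: pickP => [w ew | none] /=; last first.
    by have [w ew] := nb t tT; rewrite none in ew.
  rewrite ew andbT inE; apply/andP; split.
    by apply/negP => wT; have := HR1a t w tT wT; rewrite ew.
  by apply/existsP; exists t; rewrite tT Hsym.
have finj : {in T &, injective f}.
  move=> t1 t2 h1 h2 E; case: (eqVneq t1 t2) => // ne; exfalso.
  have /andP [f1N e1] := fN t1 h1; have /andP [_ e2] := fN t2 h2.
  apply: (HR2 (f t1) t1 t2 (NT _ f1N) h1 h2 ne); first by rewrite Hsym.
  by rewrite E Hsym.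
have TN : (#|T| <= #|N|)%N.
  rewrite -(card_in_imset finj); apply: subset_leq_card; apply/subsetP => y.
  by case/imsetP => t tT ->; case/andP: (fN t tT).
have : (#|T|%:R : rat) <= 2 * k%:~R.
  apply: le_trans (_ : 2 * LP <= _); last by rewrite ler_pM2l // -subr_ge0.
  by apply: le_trans HN; rewrite ler_nat.
by rewrite -(ler_int rat) intrM.
Qed.
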